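(* Let $D\subseteq\mathbb{R}^n$ be nonempty, convex, closed and bounded, and let $f:\mathbb{R}^n\to\mathbb{R}$ be continuously differentiable. Consider Method (CGMI) (described in the context). Then: (i) the number of changes of the index $k$ at each stage $p$ is finite, so the sequence $\{w^p\}_{p\ge0}$ is infinite; (ii) the sequence $\{w^p\}$ has limit points, and all of them belong to $D^0$; (iii) if, in addition, $f$ is pseudo-convex on $D$, then all limit points of $\{w^p\}$ belong to $D^*$, and $\lim_{p\to\infty}f(w^p)=f^*$.
   Context: Notation: $f'(x)$ is the gradient of $f$; $\mathbb{Z}_+$ is the set of non-negative integers. The problem is $\min_{x\in D}f(x)$; $f^*=\inf_{x\in D}f(x)$ and $D^*$ is its solution set. $D^0$ is the set of $x^*\in D$ with $\langle f'(x^* ),x-x^*\rangle\ge0$ for all $x\in D$. $\mu(x)=\max_{y\in D}\langle f'(x),x-y\rangle$. A differentiable $\varphi$ is pseudo-convex on $D$ if for all $x,y\in D$, $\langle\varphi'(x),y-x\rangle\ge0$ implies $\varphi(y)\ge\varphi(x)$. Method (CGMI): Choose $w^0\in D$, $\beta\in(0,1)$, $\theta\in(0,1)$, and a positive sequence $\{\delta_p\}$ with $\delta_p\to0$. Set $p=1$. (Step 0) Set $k=0$, $x^0=w^{p-1}$. (Step 1) If $\mu(x^k)<\delta_p$, set $w^p=x^k$, replace $p$ by $p+1$ and go to Step 0 (restart). Otherwise choose any $z^k\in D$ with $\langle f'(x^k),x^k-z^k\rangle\ge\delta_p$. (Step 2) Set $d^k=z^k-x^k$, let $m$ be the smallest number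 in $\mathbb{Z}_+$ with $f(x^k+\theta^m d^k)\le f(x^k)+\beta\theta^m\langle f'(x^k),d^k\rangle$, set $\lambda_k=\theta^m$, $x^{k+1}=x^k+\lambda_k d^k$, $k=k+1$, and go to Step 1. The iterations with a fixed value of $p$ form stage $p$. *)

(* Defs.v *)
From mathcomp Require Import all_boot.
From Stdlib Require Import Reals ClassicalEpsilon.

Open Scope R_scope.

Definition vec (n : nat) := 'I_n -> R.

Definition vadd {n} (x y : vec n) : vec n := fun i => x i + y i.
Definition vsub {n} (x y : vec n) : vec n := fun i => x i - y i.
Definition vscale {n} (a : R) (x : vec n) : vec n := fun i => a * x i.

Definition dot {n} (x y : vec n) : R := \big[Rplus/R0]_(i < n) (x i * y i).
Definition vnorm {n} (x : vec n) : R := sqrt (dot x x).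

Definition convex_vset {n} (D : vec n -> Prop) : Prop :=
  forall x y t, D x -> D y -> 0 <= t <= 1 -> D (vadd x (vscale t (vsub y x))).
Definition closed_vset {n} (D : vec n -> Prop) : Prop :=
  forall x, (forall eps, 0 < eps -> exists y, D y /\ vnorm (vsub y x) < eps) -> D x.
Definition bounded_vset {n} (D : vec n -> Prop) : Prop :=
  exists M, forall x, D x -> vnorm x <= M.

Definition has_gradient {n} (f : vec n -> R) (g : vec n -> vec n) : Prop :=
  forall x eps, 0 < eps -> exists eta, 0 < eta /\
    forall y, vnorm (vsub y x) < eta ->
      Rabs (f y - f x - dot (g x) (vsub y x)) <= eps * vnorm (vsub y x).
Definition continuous_map {n m} (g : vec n -> vec m) : Prop :=
  forall x eps, 0 < eps -> exists eta, 0 < eta /\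
    forall y, vnorm (vsub y x) < eta -> vnorm (vsub (g y) (g x)) < eps.
Definition C1_with_gradient {n} (f : vec n -> R) (g : vec n -> vec n) : Prop :=
  has_gradient f g /\ continuous_map g.

(* mu(x) = max_{y in D} <f'(x), x - y>  (chosen by epsilon; the max exists
   under the standing hypotheses: D nonempty compact) *)
Definition is_max_of {n} (D : vec n -> Prop) (g : vec n -> vec n) (x : vec n) (m : R) : Prop :=
  (exists y, D y /\ m = dot (g x) (vsub x y)) /\
  (forall y, D y -> dot (g x) (vsub x y) <= m).
Definition mu {n} (D : vec n -> Prop) (g : vec n -> vec n) (x : vec n) : R :=
  epsilon (inhabits R0) (is_max_of D g x).

Definition D0 {n} (D : vec n -> Prop) (g : vec n -> vec n) (x : vec n) : Prop :=
  D x /\ forall y, D y -> 0 <= dot (g x) (vsub y x).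
Definition Dstar {n} (D : vec n -> Prop) (f : vec n -> R) (x : vec n) : Prop :=
  D x /\ forall y, D y -> f x <= f y.
Definition is_inf_on {n} (D : vec n -> Prop) (f : vec n -> R) (l : R) : Prop :=
  (forall x, D x -> l <= f x) /\
  (forall m, (forall x, D x -> m <= f x) -> m <= l).

Definition pseudo_convex_on {n} (D : vec n -> Prop) (phi : vec n -> R)
    (phi' : vec n -> vec n) : Prop :=
  forall x y, D x -> D y -> 0 <= dot (phi' x) (vsub y x) -> phi x <= phi y.

Definition armijo {n} (f : vec n -> R) (g : vec n -> vec n) (beta theta : R)
    (x d : vec n) (m : nat) : Prop :=
  f (vadd x (vscale (theta ^ m) d)) <= f x + beta * theta ^ m * dot (g x) d.

(* One change of the index k inside a stage with tolerance delta:
   Step 1 (mu(x) >= delta, choice of any admissible z) followed by Step 2. *)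
Definition cgmi_step {n} (D : vec n -> Prop) (f : vec n -> R) (g : vec n -> vec n)
    (beta theta delta : R) (x x' : vec n) : Prop :=
  delta <= mu D g x /\
  exists z, D z /\ delta <= dot (g x) (vsub x z) /\
    exists m : nat,
      armijo f g beta theta x (vsub z x) m /\
      (forall m', lt m' m -> ~ armijo f g beta theta x (vsub z x) m') /\
      x' = vadd x (vscale (theta ^ m) (vsub z x)).

(* A complete stage with tolerance delta started at x = w^{p-1} and ending
   (restart) at y = w^p: finitely many steps, then mu(y) < delta. *)
Definition cgmi_stage {n} (D : vec n -> Prop) (f : vec n -> R) (g : vec n -> vec n)
    (beta theta delta : R) (x y : vec n) : Prop :=
  exists (K : nat) (xs : nat -> vec n),
    xs O = x /\ xs K = y /\
    (forall k, lt k K -> cgmi_step D f g beta theta delta (xs k) (xs (S k))) /\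
    mu D g y < delta.

Definition limit_point {n} (w : nat -> vec n) (x : vec n) : Prop :=
  forall eps, 0 < eps -> forall N : nat, exists p : nat, le N p /\ vnorm (vsub (w p) x) < eps.

(* Main.v *)
Require Import Defs.
From HB Require Import structures.
From mathcomp Require Import all_boot.
From Stdlib Require Import Reals Lra Psatz ClassicalEpsilon Classical FunctionalExtensionality.
Open Scope R_scope.

Lemma Rplus_assoc' : associative Rplus.
Proof. move=> x y z; ring. Qed.
HB.instance Definition _ := Monoid.isComLaw.Build R R0 Rplus Rplus_assoc' Rplus_comm Rplus_0_l.

Section V.
Variable n : nat.
Implicit Types x y z u v : vec n.

Ltac vext := apply functional_extensionality => i; rewrite /vsub /vadd /vscale; ring.

Lemma big_scal (F : 'I_n -> R) c :
  \big[Rplus/R0]_(i < n) (c * F i) = c * \big[Rplus/R0]_(i < n) F i.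
Proof.
apply: (big_ind2 (fun a b => a = c * b)); first ring.
  by move=> a b a' b' -> ->; ring.
by [].
Qed.

Lemma big_le (F G : 'I_n -> R) :
  (forall i, F i <= G i) -> \big[Rplus/R0]_(i < n) F i <= \big[Rplus/R0]_(i < n) G i.
Proof.
move=> H; apply: (big_ind2 (fun a b => a <= b)); first lra.
  move=> a b a' b' ? ?; lra.
by move=> i _; apply H.
Qed.

Lemma big_const_R c : \big[Rplus/R0]_(i < n) c = INR n * c.
Proof.
rewrite big_const_ord. elim: n => [|k IH]; first by simpl; ring.
rewrite S_INR /= IH; ring.
Qed.

Lemma big_split_R (F G : 'I_n -> R) :
  \big[Rplus/R0]_(i < n) (F i + G i) = \big[Rplus/R0]_(i < n) F i + \big[Rplus/R0]_(i < n) G i.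
Proof. exact: big_split. Qed.

Lemma bigD1_R (j : 'I_n) (F : 'I_n -> R) :
  \big[Rplus/R0]_(i < n) F i = F j + \big[Rplus/R0]_(i < n | i != j) F i.
Proof. exact: bigD1. Qed.

Lemma dot_add_l x y z : dot (vadd x y) z = dot x z + dot y z.
Proof. rewrite /dot -big_split_R; apply eq_bigr => i _; rewrite /vadd; ring. Qed.
Lemma dot_scale_l a x z : dot (vscale a x) z = a * dot x z.
Proof. rewrite /dot -big_scal; apply eq_bigr => i _; rewrite /vscale; ring. Qed.
Lemma dot_comm x y : dot x y = dot y x.
Proof. rewrite /dot; apply eq_bigr => i _; ring. Qed.
Lemma dot_sub_l x y z : dot (vsub x y) z = dot x z - dot y z.
Proof.
have -> : vsub x y = vadd x (vscale (-1) y) by vext.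
rewrite dot_add_l dot_scale_l; ring.
Qed.
Lemma dot_add_r x y z : dot z (vadd x y) = dot z x + dot z y.
Proof. by rewrite dot_comm dot_add_l (dot_comm x) (dot_comm y). Qed.
Lemma dot_sub_r x y z : dot z (vsub x y) = dot z x - dot z y.
Proof. by rewrite dot_comm dot_sub_l (dot_comm x) (dot_comm y). Qed.
Lemma dot_scale_r a x z : dot z (vscale a x) = a * dot z x.
Proof. by rewrite dot_comm dot_scale_l dot_comm. Qed.

Lemma dot_ge0 x : 0 <= dot x x.
Proof.
rewrite /dot; apply: (big_ind (fun a => 0 <= a)); [lra | move=> a b ? ?; lra |].
move=> i _; nra.
Qed.

Lemma coord_le_dot x i : x i * x i <= dot x x.
Proof.
rewrite /dot (bigD1_R i).
have : 0 <= \big[Rplus/R0]_(j < n | j != i) (x j * x j).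
  apply: (big_ind (fun a => 0 <= a)); [lra | move=> a b ? ?; lra |].
  move=> j _; nra.
lra.
Qed.

Lemma vnorm_ge0 x : 0 <= vnorm x.
Proof. apply sqrt_pos. Qed.
Lemma vnorm_sq x : vnorm x * vnorm x = dot x x.
Proof. apply sqrt_sqrt, dot_ge0. Qed.

Lemma dot_zero_vec x : dot x x = 0 -> forall y, dot x y = 0.
Proof.
move=> H y. rewrite /dot big1 // => i _.
have := coord_le_dot x i. rewrite H => Hi.
have -> : x i = 0 by nra.
ring.
Qed.

Lemma CS_sq x y : dot x y * dot x y <= dot x x * dot y y.
Proof.
have Hy := dot_ge0 y.
case: (Req_dec (dot y y) 0) => Hy0.
  rewrite (dot_comm x y) (dot_zero_vec y Hy0) Hy0; lra.
set t := dot x y / dot y y.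
have := dot_ge0 (vsub x (vscale t y)).
rewrite !dot_sub_l !dot_sub_r !dot_scale_l !dot_scale_r (dot_comm y x).
rewrite /t => H.
have Hpos : 0 < dot y y by lra.
have : 0 <= dot y y * (dot x x - dot x y / dot y y * dot x y -
      (dot x y / dot y y * dot x y - dot x y / dot y y * (dot x y / dot y y * dot y y))).
  apply Rmult_le_pos; lra.
have E : dot y y * (dot x x - dot x y / dot y y * dot x y -
      (dot x y / dot y y * dot x y - dot x y / dot y y * (dot x y / dot y y * dot y y)))
   = dot x x * dot y y - dot x y * dot x y by field; lra.
rewrite E; lra.
Qed.

Lemma CS x y : Rabs (dot x y) <= vnorm x * vnorm y.
Proof.
have H := CS_sq x y. have Hx := vnorm_sq x. have Hy := vnorm_sq y.
have := vnorm_ge0 x; have := vnorm_ge0 y => ? ?.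
rewrite -Hx -Hy in H.
have Hp : 0 <= vnorm x * vnorm y by apply Rmult_le_pos.
apply Rabs_le; split; apply Rnot_lt_le => Hc; nra.
Qed.

Lemma CS' x y : dot x y <= vnorm x * vnorm y.
Proof. have := CS x y; have := Rle_abs (dot x y); lra. Qed.

Lemma vnorm_add x y : vnorm (vadd x y) <= vnorm x + vnorm y.
Proof.
have H := vnorm_sq (vadd x y).
rewrite !dot_add_l !dot_add_r (dot_comm y x) -vnorm_sq -(vnorm_sq y) in H.
have := CS' x y. have := vnorm_ge0 x; have := vnorm_ge0 y; have := vnorm_ge0 (vadd x y).
nra.
Qed.

Lemma vnorm_scale a x : vnorm (vscale a x) = Rabs a * vnorm x.
Proof.
have H := vnorm_sq (vscale a x).
rewrite dot_scale_l dot_scale_r -vnorm_sq in H.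
have := vnorm_ge0 x; have := vnorm_ge0 (vscale a x); have := Rabs_pos a => ? ? ?.
have Ha : Rabs a * Rabs a = a * a by rewrite -Rabs_mult Rabs_pos_eq; nra.
apply Rsqr_inj; rewrite /Rsqr; try nra.
Qed.

Lemma vnorm_sub_sym x y : vnorm (vsub x y) = vnorm (vsub y x).
Proof.
have -> : vsub x y = vscale (-1) (vsub y x) by vext.
rewrite vnorm_scale Rabs_Ropp Rabs_R1; ring.
Qed.

Lemma vnorm_tri x y z : vnorm (vsub x z) <= vnorm (vsub x y) + vnorm (vsub y z).
Proof.
have -> : vsub x z = vadd (vsub x y) (vsub y z) by vext.
apply vnorm_add.
Qed.

Lemma vnorm_sub_le x y : vnorm (vsub x y) <= vnorm x + vnorm y.
Proof.
have -> : vsub x y = vadd x (vscale (-1) y) by vext.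
rewrite -[vnorm y]Rmult_1_l -(Rabs_R1) -Rabs_Ropp -vnorm_scale; apply vnorm_add.
Qed.

Lemma coord_le x i : Rabs (x i) <= vnorm x.
Proof.
have := coord_le_dot x i; rewrite -vnorm_sq => H.
have := vnorm_ge0 x => ?.
apply Rabs_le; split; nra.
Qed.

Lemma dot_coords x c : (forall i, Rabs (x i) <= c) -> dot x x <= INR n * (c * c).
Proof.
move=> H.
rewrite /dot -big_const_R; apply big_le => i.
have := H i; have := Rabs_pos (x i) => ? ?.
have : Rabs (x i) * Rabs (x i) = x i * x i by rewrite -Rabs_mult Rabs_pos_eq; nra.
nra.
Qed.

End V.

Ltac vext := apply functional_extensionality => i; rewrite /vsub /vadd /vscale; ring.

Definition strict (phi : nat -> nat) := forall k, (phi k < phi (S k))%coq_nat.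

Lemma phi_ge phi : strict phi -> forall k, (k <= phi k)%coq_nat.
Proof. move=> H; elim=> [|k IH]; [lia | have := H k; lia]. Qed.

Lemma phi_mono phi : strict phi -> forall a b, (a <= b)%coq_nat -> (phi a <= phi b)%coq_nat.
Proof.
move=> H a b Hab; elim: Hab => [|b' _ IH]; [lia | have := H b'; lia].
Qed.

Lemma strict_comp phi psi : strict phi -> strict psi -> strict (fun k => phi (psi k)).
Proof. move=> H1 H2 k; have := H2 k => H; have := phi_mono phi H1 (psi k).+1 (psi k.+1) H; have := H1 (psi k); lia. Qed.

Lemma Un_cv_sub v l phi : strict phi -> Un_cv v l -> Un_cv (fun k => v (phi k)) l.
Proof.
move=> Hs Hv eps Heps; have [N HN] := Hv eps Heps; exists N => k Hk.
apply HN; have := phi_ge phi Hs k; lia.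
Qed.

Lemma inv_small eps : 0 < eps -> exists N, forall k, (N <= k)%coq_nat -> / (INR k + 1) < eps.
Proof.
move=> He; have [N HN] := INR_archimed eps 1 He.
exists N => k Hk.
have Hk' := le_INR _ _ Hk. have := pos_INR N => ?.
have H1 : 1 < eps * (INR k + 1) by nra.
apply (Rmult_lt_reg_r (INR k + 1)); [lra|]; rewrite Rinv_l; lra.
Qed.

Lemma subseq_cluster (u : nat -> R) l :
  (forall eps, 0 < eps -> forall N, exists p, (N <= p)%coq_nat /\ Rabs (u p - l) < eps) ->
  exists phi : nat -> nat, strict phi /\ Un_cv (fun k => u (phi k)) l.
Proof.
move=> H.
pose pick k N := epsilon (inhabits 0%nat) (fun p => (N <= p)%coq_nat /\ Rabs (u p - l) < / (INR k + 1)).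
have Hpick : forall k N, (N <= pick k N)%coq_nat /\ Rabs (u (pick k N) - l) < / (INR k + 1).
  move=> k N; apply epsilon_spec; apply H; apply Rinv_0_lt_compat; have := pos_INR k; lra.
pose phi := nat_rect (fun _ => nat) (pick 0%nat 0%nat) (fun k p => pick (S k) (S p)).
have Hphi : forall k, Rabs (u (phi k) - l) < / (INR k + 1).
  case=> [|k]; [exact: (Hpick 0%nat 0%nat).2 | exact: (Hpick k.+1 (S (phi k))).2].
exists phi; split.
  move=> k; change (phi (S k)) with (pick (S k) (S (phi k))); have := (Hpick (S k) (S (phi k))).1; lia.
move=> eps Heps; have [N HN] := inv_small eps Heps; exists N => k Hk.
rewrite /R_dist; have := Hphi k; have := HN k Hk; lra.
Qed.

Lemma Rabs_le_inv' a b : Rabs a <= b -> -b <= a <= b.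
Proof. split_Rabs; lra. Qed.

Lemma bw1 (u : nat -> R) M : (forall j, Rabs (u j) <= M) ->
  exists phi l, strict phi /\ Un_cv (fun k => u (phi k)) l.
Proof.
move=> Hb.
have [l Hl] := Bolzano_Weierstrass u (fun c => -M <= c <= M) (compact_P3 (-M) M)
  (fun j => Rabs_le_inv' _ _ (Hb j)).
have [phi [Hs Hc]] : exists phi, strict phi /\ Un_cv (fun k => u (phi k)) l.
  apply subseq_cluster => eps Heps N.
  have Hn : neighbourhood (fun y => Rabs (y - l) < eps) l.
    by exists (mkposreal eps Heps); move=> y Hy; exact: Hy.
  have [p [Hp1 Hp2]] := Hl _ N Hn; by exists p.
by exists phi, l.
Qed.

Lemma bw_coords n (u : nat -> vec n) M : (forall j i, Rabs (u j i) <= M) ->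
  forall k, exists phi, strict phi /\
     forall i : 'I_n, (i < k)%coq_nat -> exists l, Un_cv (fun j => u (phi j) i) l.
Proof.
move=> Hb; elim=> [|k [phi [Hs Hc]]].
  by exists (fun k : nat => k); split; [move=> k; simpl; lia | move=> i Hi; lia].
case: (Compare_dec.lt_dec k n) => Hkn; last first.
  exists phi; split => // i Hi; apply Hc; move/ltP: (ltn_ord i); lia.
pose i0 : 'I_n := @Ordinal n k (introT ltP Hkn).
have [psi [l0 [Hs' Hc']]] := bw1 (fun j => u (phi j) i0) M (fun j => Hb _ _).
exists (fun j => phi (psi j)); split; first exact: strict_comp.
move=> i Hi; case: (Nat.eq_dec i k) => Hik.
  have -> : i = i0 by apply ord_inj.
  by exists l0.
have [l Hl] := Hc i ltac:(lia).
exists l; exact: (Un_cv_sub (fun j => u (phi j) i) l psi Hs' Hl).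
Qed.

Lemma bw n (u : nat -> vec n) M : (forall j, vnorm (u j) <= M) -> exists x, limit_point u x.
Proof.
move=> Hb.
have [phi [Hs Hc]] := bw_coords n u M (fun j i => Rle_trans _ _ _ (coord_le _ _ i) (Hb j)) n.
pose x : vec n := fun i => epsilon (inhabits 0) (fun l => Un_cv (fun j => u (phi j) i) l).
have Hx : forall i, Un_cv (fun j => u (phi j) i) (x i).
  move=> i; apply epsilon_spec; apply Hc; move/ltP: (ltn_ord i); lia.
exists x => eps Heps N.
have Hn := pos_INR n.
pose c := eps / (INR n + 1).
have Hc0 : 0 < c by rewrite /c; apply Rdiv_lt_0_compat; lra.
have Hce : c * (INR n + 1) = eps by rewrite /c; field; lra.
pose J i := epsilon (inhabits 0%nat) (fun J => forall j, (J <= j)%coq_nat -> R_dist (u (phi j) i) (x i) < c).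
have HJ : forall i j, (J i <= j)%coq_nat -> R_dist (u (phi j) i) (x i) < c.
  move=> i; rewrite /J; apply (@epsilon_spec nat (inhabits 0%nat) (fun J0 => forall j, (J0 <= j)%coq_nat -> R_dist (u (phi j) i) (x i) < c)).
  have [N0 HN0] := Hx i c Hc0; exists N0 => j0 Hj0; exact: HN0.
pose Jm := (\max_(i < n) J i)%N.
pose j := Nat.max N Jm.
exists (phi j); split; first by have := phi_ge phi Hs j; lia.
have Hd : dot (vsub (u (phi j)) x) (vsub (u (phi j)) x) <= INR n * (c * c).
  apply dot_coords => i; apply Rlt_le; rewrite /vsub; apply HJ.
  have := @leq_bigmax _ J i; move/leP; rewrite -/Jm; lia.
have := vnorm_sq _ (vsub (u (phi j)) x); have := vnorm_ge0 _ (vsub (u (phi j)) x) => ? ?.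
apply Rnot_le_lt => Hc1.
have : eps * eps <= INR n * (c * c) by nra.
rewrite -Hce; nra.
Qed.

Arguments big_le {n}. Arguments dot_add_l {n}. Arguments dot_scale_l {n}. Arguments dot_comm {n}.
Arguments dot_sub_l {n}. Arguments dot_add_r {n}. Arguments dot_sub_r {n}. Arguments dot_scale_r {n}.
Arguments dot_ge0 {n}. Arguments vnorm_ge0 {n}. Arguments vnorm_sq {n}. Arguments CS {n}. Arguments CS' {n}.
Arguments vnorm_add {n}. Arguments vnorm_scale {n}. Arguments vnorm_sub_sym {n}. Arguments vnorm_tri {n}.
Arguments vnorm_sub_le {n}. Arguments coord_le {n}. Arguments dot_coords {n}.

Lemma f_cont n (f : vec n -> R) g : has_gradient f g ->
  forall x eps, 0 < eps -> exists eta, 0 < eta /\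
    forall y, vnorm (vsub y x) < eta -> Rabs (f y - f x) < eps.
Proof.
move=> Hg x eps Heps.
have [eta1 [He1 H1]] := Hg x 1 Rlt_0_1.
have Hgx := vnorm_ge0 (g x).
have He2 : 0 < eps / (vnorm (g x) + 1) by apply Rdiv_lt_0_compat; lra.
exists (Rmin eta1 (eps / (vnorm (g x) + 1))); split; first by apply Rmin_glb_lt.
move=> y Hy.
have Hy1 : vnorm (vsub y x) < eta1 by have := Rmin_l eta1 (eps / (vnorm (g x) + 1)); lra.
have Hy2 : vnorm (vsub y x) < eps / (vnorm (g x) + 1) by have := Rmin_r eta1 (eps / (vnorm (g x) + 1)); lra.
have Hy3 : vnorm (vsub y x) * (vnorm (g x) + 1) < eps.
  have E : eps / (vnorm (g x) + 1) * (vnorm (g x) + 1) = eps by field; lra.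
  have := vnorm_ge0 (vsub y x); nra.
have := H1 y Hy1. have := CS (g x) (vsub y x).
have := vnorm_ge0 (vsub y x).
move: (dot (g x) (vsub y x)) => dd; split_Rabs; nra.
Qed.

Lemma lin_diff n (c x y y' : vec n) :
  Rabs (dot c (vsub x y) - dot c (vsub x y')) <= vnorm c * vnorm (vsub y y').
Proof.
have -> : dot c (vsub x y) - dot c (vsub x y') = dot c (vsub y' y) by rewrite !dot_sub_r; ring.
rewrite (vnorm_sub_sym y y'); apply CS.
Qed.

Lemma closed_lp n (D : vec n -> Prop) w x : closed_vset D ->
  (forall p, D (w p)) -> limit_point w x -> D x.
Proof.
move=> Hcl Hw Hl; apply Hcl => eps Heps.
have [p [_ Hp]] := Hl eps Heps 0%nat.
by exists (w p).
Qed.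

Lemma bounded_nonneg n (D : vec n -> Prop) : bounded_vset D -> (exists x, D x) ->
  exists M, 0 <= M /\ forall x, D x -> vnorm x <= M.
Proof.
move=> [M HM] [x0 Hx0]; exists M; split => //.
exact: Rle_trans (vnorm_ge0 x0) (HM x0 Hx0).
Qed.

Lemma max_exists n (D : vec n -> Prop) : (exists x, D x) -> closed_vset D -> bounded_vset D ->
  forall c x : vec n, exists m, (exists y, D y /\ m = dot c (vsub x y)) /\
     forall y, D y -> dot c (vsub x y) <= m.
Proof.
move=> Hne Hcl Hbd c x.
have [M [HM0 HM]] := bounded_nonneg n D Hbd Hne.
pose E r := exists y, D y /\ r = dot c (vsub x y).
have HbE : bound E.
  exists (vnorm c * (vnorm x + M)) => r [y [Dy ->]].
  apply: Rle_trans (CS' c (vsub x y)) _.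
  apply Rmult_le_compat_l; first exact: vnorm_ge0.
  have := vnorm_sub_le x y; have := HM y Dy; lra.
have HneE : exists r, E r by case: Hne => y Dy; exists (dot c (vsub x y)); exists y.
have [S [HSub HSlub]] := completeness E HbE HneE.
have Hseq : forall k : nat, exists y, D y /\ S - / (INR k + 1) < dot c (vsub x y).
  move=> k; apply NNPP => Hno.
  have Hk : 0 < / (INR k + 1) by apply Rinv_0_lt_compat; have := pos_INR k; lra.
  have : S <= S - / (INR k + 1).
    apply HSlub => r [y [Dy ->]].
    apply Rnot_lt_le => Hlt; apply Hno; by exists y.
  lra.
pose ys k := epsilon (inhabits x) (fun y => D y /\ S - / (INR k + 1) < dot c (vsub x y)).
have Hys : forall k, D (ys k) /\ S - / (INR k + 1) < dot c (vsub x (ys k)).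
  move=> k; rewrite /ys; apply (@epsilon_spec _ (inhabits x) (fun y => D y /\ S - / (INR k + 1) < dot c (vsub x y))).
  exact: Hseq.
have [ys0 Hlp] := bw n ys M (fun k => HM _ (Hys k).1).
have Dys0 : D ys0 := closed_lp n D ys ys0 Hcl (fun k => (Hys k).1) Hlp.
exists S; split; last by move=> y Dy; apply HSub; exists y.
exists ys0; split => //.
have Hle : dot c (vsub x ys0) <= S by apply HSub; exists ys0.
apply Rle_antisym => //.
apply Rnot_lt_le => Hlt.
set e := S - dot c (vsub x ys0).
have He : 0 < e by rewrite /e; lra.
have [N HN] := inv_small (e / 2) ltac:(lra).
have Hc := vnorm_ge0 c.
have He2 : 0 < e / 2 / (vnorm c + 1) by apply Rdiv_lt_0_compat; lra.
have [p [Hp1 Hp2]] := Hlp _ He2 N.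
have H1 := lin_diff n c x (ys p) ys0.
have H2 : vnorm c * vnorm (vsub (ys p) ys0) <= e / 2.
  have E1 : e / 2 / (vnorm c + 1) * (vnorm c + 1) = e / 2 by field; lra.
  have := vnorm_ge0 (vsub (ys p) ys0); nra.
have H3 := (Hys p).2. have H4 := HN p Hp1.
move: H1; rewrite /e in H2 H4 *; split_Rabs; lra.
Qed.

Lemma mu_spec n (D : vec n -> Prop) g : (exists x, D x) -> closed_vset D -> bounded_vset D ->
  forall x, is_max_of D g x (mu D g x).
Proof.
move=> Hne Hcl Hbd x; rewrite /mu; apply: epsilon_spec.
exact: max_exists n D Hne Hcl Hbd (g x) x.
Qed.

Lemma f_lower n (D : vec n -> Prop) f g : has_gradient f g -> (exists x, D x) -> bounded_vset D ->
  exists L, forall x, D x -> L <= f x.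
Proof.
move=> Hg Hne Hbd.
have [M [HM0 HM]] := bounded_nonneg n D Hbd Hne.
apply NNPP => Hno.
have Hseq : forall k : nat, exists y, D y /\ f y < - INR k.
  move=> k; apply NNPP => Hk; apply Hno; exists (- INR k) => y Dy.
  apply Rnot_lt_le => Hlt; apply Hk; by exists y.
case: Hne => x0 _.
pose ys k := epsilon (inhabits x0) (fun y => D y /\ f y < - INR k).
have Hys : forall k, D (ys k) /\ f (ys k) < - INR k.
  move=> k; apply (@epsilon_spec _ (inhabits x0) (fun y => D y /\ f y < - INR k)); exact: Hseq.
have [y0 Hlp] := bw n ys M (fun k => HM _ (Hys k).1).
have [eta [Heta Hc]] := f_cont n f g Hg y0 1 Rlt_0_1.
have [N HN] := INR_archimed 1 (1 - f y0) Rlt_0_1.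
have [p [Hp1 Hp2]] := Hlp eta Heta N.
have := Hc _ Hp2. have := (Hys p).2. have := le_INR _ _ Hp1.
split_Rabs; lra.
Qed.

Lemma g_unif n (D : vec n -> Prop) (g : vec n -> vec n) : continuous_map g -> (exists x, D x) -> bounded_vset D ->
  forall eps, 0 < eps -> exists eta, 0 < eta /\ forall x y, D x -> D y ->
    vnorm (vsub y x) < eta -> vnorm (vsub (g y) (g x)) < eps.
Proof.
move=> Hgc Hne Hbd eps Heps.
have [M [HM0 HM]] := bounded_nonneg n D Hbd Hne.
apply NNPP => Hno.
have Hseq : forall k : nat, exists xy : vec n * vec n, D xy.1 /\ D xy.2 /\
    vnorm (vsub xy.2 xy.1) < / (INR k + 1) /\ eps <= vnorm (vsub (g xy.2) (g xy.1)).
  move=> k; apply NNPP => Hk; apply Hno; exists (/ (INR k + 1)); split.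
    apply Rinv_0_lt_compat; have := pos_INR k; lra.
  move=> x y Dx Dy Hxy; apply Rnot_le_lt => Hle; apply Hk; by exists (x, y).
case: Hne => x0 _.
pose P k (xy : vec n * vec n) := D xy.1 /\ D xy.2 /\
    vnorm (vsub xy.2 xy.1) < / (INR k + 1) /\ eps <= vnorm (vsub (g xy.2) (g xy.1)).
pose s k := epsilon (inhabits (x0, x0)) (P k).
have Hs : forall k, P k (s k) by move=> k; apply: epsilon_spec; exact: Hseq.
have [z Hlp] := bw n (fun k => (s k).1) M (fun k => HM _ (Hs k).1).
have [eta [Heta Hc]] := Hgc z (eps / 2) ltac:(lra).
have [N HN] := inv_small (eta / 2) ltac:(lra).
have [p [Hp1 Hp2]] := Hlp (eta / 2) ltac:(lra) N.
have [_ [_ [H1 H2]]] := Hs p.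
have H3 := HN p Hp1.
have Hz1 : vnorm (vsub (s p).1 z) < eta by simpl in Hp2; lra.
have Hz2 : vnorm (vsub (s p).2 z) < eta.
  have := vnorm_tri (s p).2 (s p).1 z; simpl in Hp2; lra.
have A := Hc _ Hz1. have B := Hc _ Hz2.
have := vnorm_tri (g (s p).2) (g z) (g (s p).1).
rewrite (vnorm_sub_sym (g z)); lra.
Qed.

Lemma deriv_line n (f : vec n -> R) g : has_gradient f g -> forall x d t,
  derivable_pt_lim (fun t => f (vadd x (vscale t d))) t (dot (g (vadd x (vscale t d))) d).
Proof.
move=> Hg x d t eps Heps.
set y0 := vadd x (vscale t d).
have Hd := vnorm_ge0 d.
set e' := eps / 2 / (vnorm d + 1).
have He' : 0 < e' by rewrite /e'; apply Rdiv_lt_0_compat; lra.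
have [eta [Heta H]] := Hg y0 e' He'.
have Hdel : 0 < eta / (vnorm d + 1) by apply Rdiv_lt_0_compat; lra.
exists (mkposreal _ Hdel); move=> h Hh0 Hh; simpl in Hh.
have E : vsub (vadd x (vscale (t + h) d)) y0 = vscale h d.
  rewrite /y0; apply functional_extensionality => i; rewrite /vsub /vadd /vscale; ring.
have Hh' : Rabs h * (vnorm d + 1) < eta.
  have E2 : eta / (vnorm d + 1) * (vnorm d + 1) = eta by field; lra.
  have := Rabs_pos h; nra.
have Hlt : vnorm (vsub (vadd x (vscale (t + h) d)) y0) < eta.
  rewrite E vnorm_scale; have := Rabs_pos h; nra.
have Hb := H _ Hlt. rewrite E dot_scale_r vnorm_scale in Hb.
have Hhp : 0 < Rabs h by apply Rabs_pos_lt.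
cbv beta.
have -> : (f (vadd x (vscale (t + h) d)) - f y0) / h - dot (g y0) d =
   (f (vadd x (vscale (t + h) d)) - f y0 - h * dot (g y0) d) * / h by field.
rewrite Rabs_mult Rabs_inv.
apply Rle_lt_trans with (e' * vnorm d).
  apply (Rmult_le_reg_r (Rabs h)) => //.
  rewrite Rmult_assoc Rinv_l; last lra.
  nra.
have E3 : e' * (vnorm d + 1) = eps / 2 by rewrite /e'; field; lra.
nra.
Qed.

Definition hyps n (D : vec n -> Prop) (f : vec n -> R) (g : vec n -> vec n) (beta theta : R) : Prop :=
  (exists x, D x) /\ convex_vset D /\ closed_vset D /\ bounded_vset D /\
  C1_with_gradient f g /\ (0 < beta < 1) /\ (0 < theta < 1).

Lemma armijo_uniform n D f g beta theta : @hyps n D f g beta theta ->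
  forall delta, 0 < delta -> exists tau, 0 < tau <= 1 /\
  forall x z t, D x -> D z -> delta <= dot (g x) (vsub x z) -> 0 < t <= tau ->
    f (vadd x (vscale t (vsub z x))) <= f x + beta * t * dot (g x) (vsub z x).
Proof.
move=> [Hne [Hcv [Hcl [Hbd [[Hg Hgc] [Hb Ht]]]]]] delta Hdel.
have [M [HM0 HM]] := bounded_nonneg n D Hbd Hne.
set K := 2 * M + 1.
have HK : 0 < K by rewrite /K; lra.
have Hd : forall x z, D x -> D z -> vnorm (vsub z x) <= K.
  move=> x z Dx Dz; have := vnorm_sub_le z x; have := HM x Dx; have := HM z Dz; rewrite /K; lra.
set eps := (1 - beta) * delta / K.
have Heps : 0 < eps by rewrite /eps; apply Rdiv_lt_0_compat => //; nra.
have [eta [Heta Hu]] := g_unif n D g Hgc Hne Hbd eps Heps.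
have HeK : 0 < eta / K by apply Rdiv_lt_0_compat.
exists (Rmin 1 (eta / K)); split.
  split; [by apply Rmin_glb_lt; lra | exact: Rmin_l].
move=> x z t Dx Dz Hxz [Ht0 Htt].
have Ht1 : t <= 1 by have := Rmin_l 1 (eta / K); lra.
have Ht2 : t * K <= eta.
  have := Rmin_r 1 (eta / K) => ?.
  have E : eta / K * K = eta by field; lra.
  nra.
set d := vsub z x.
pose phi s := f (vadd x (vscale s d)).
pose pr : derivable phi := fun s => exist _ _ (deriv_line n f g Hg x d s).
have [c [Hc [Hc0 Hct]]] := MVT_cor1 phi 0 t pr Ht0.
rewrite /derive_pt /pr /= in Hc.
have E0 : vadd x (vscale 0 d) = x.
  apply functional_extensionality => i; rewrite /vadd /vscale; ring.
rewrite /phi E0 in Hc.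
set xc := vadd x (vscale c d) in Hc.
have Dxc : D xc by apply Hcv => //; lra.
have Exc : vsub xc x = vscale c d.
  apply functional_extensionality => i; rewrite /xc /vsub /vadd /vscale; ring.
have Hdn : vnorm d <= K by apply Hd.
have Hxc : vnorm (vsub xc x) < eta.
  rewrite Exc vnorm_scale Rabs_pos_eq; last lra.
  have := vnorm_ge0 d; nra.
have Hgu := Hu x xc Dx Dxc Hxc.
have Hsplit : dot (g xc) d = dot (g x) d + dot (vsub (g xc) (g x)) d by rewrite dot_sub_l; ring.
have HE : dot (vsub (g xc) (g x)) d <= (1 - beta) * delta.
  apply: Rle_trans (CS' _ _) _.
  have E : eps * K = (1 - beta) * delta by rewrite /eps; field; lra.
  have := vnorm_ge0 d; have := vnorm_ge0 (vsub (g xc) (g x)); nra.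
have Hdd : dot (g x) d = - dot (g x) (vsub x z) by rewrite /d !dot_sub_r; ring.
rewrite Hsplit in Hc.
have : f (vadd x (vscale t d)) - f x <= t * (dot (g x) d + (1 - beta) * delta) by
  rewrite Hc; nra.
have H1 : (1 - beta) * (dot (g x) d + delta) <= 0 by nra.
have H2 : t * ((1 - beta) * (dot (g x) d + delta)) <= 0 by nra.
nra.
Qed.

Lemma min_nat (P : nat -> Prop) : (exists m, P m) ->
  exists m, P m /\ forall m', (m' < m)%coq_nat -> ~ P m'.
Proof.
move=> [m Hm]; revert Hm; pattern m; apply Wf_nat.lt_wf_ind; clear m => m IH Hm.
case: (classic (exists m', (m' < m)%coq_nat /\ P m')) => [[m' [Hlt Hm']] | Hno].
  exact: IH m' Hlt Hm'.
exists m; split => // m' Hlt Hm'; apply Hno; by exists m'.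
Qed.

Lemma pow_01 th m : 0 < th < 1 -> 0 < th ^ m <= 1.
Proof. move=> Ht; elim: m => [|m IH] /=; nra. Qed.

Lemma step_D n D f g beta theta delta x x' : @hyps n D f g beta theta ->
  D x -> cgmi_step D f g beta theta delta x x' -> D x'.
Proof.
move=> [_ [Hcv [_ [_ [_ [_ Ht]]]]]] Dx [_ [z [Dz [_ [m [_ [_ ->]]]]]]].
apply Hcv => //; have := pow_01 theta m Ht; lra.
Qed.

Lemma step_dec n D f g beta theta delta : @hyps n D f g beta theta -> 0 < delta ->
  exists c, 0 < c /\ forall x x', D x -> cgmi_step D f g beta theta delta x x' -> f x' <= f x - c.
Proof.
move=> H Hdel.
have [tau [Htau Hu]] := armijo_uniform n D f g beta theta H delta Hdel.
have [_ [_ [_ [_ [_ [Hb Ht]]]]]] := H.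
exists (beta * theta * tau * delta); split.
  have H1 := Rmult_lt_0_compat _ _ (proj1 Hb) (proj1 Ht).
  have H2 := Rmult_lt_0_compat _ _ H1 (proj1 Htau).
  exact: Rmult_lt_0_compat _ _ H2 Hdel.
move=> x x' Dx [_ [z [Dz [Hz [m [Ha [Hmin ->]]]]]]].
have Hm : theta * tau <= theta ^ m.
  case: m Ha Hmin => [|m0] Ha Hmin; first by simpl; nra.
  have : tau < theta ^ m0.
    apply Rnot_le_lt => Hle; apply (Hmin m0); first lia.
    rewrite /armijo; apply Hu => //; have := pow_01 theta m0 Ht; lra.
  simpl; nra.
rewrite /armijo in Ha.
have Hdd : dot (g x) (vsub z x) = - dot (g x) (vsub x z) by rewrite !dot_sub_r; ring.
rewrite Hdd in Ha.
have := pow_01 theta m Ht => ?.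
have H1 : beta * (theta * tau) * delta <= beta * theta ^ m * dot (g x) (vsub x z).
  have Hb1 : beta * (theta * tau) <= beta * theta ^ m by apply Rmult_le_compat_l; lra.
  apply Rmult_le_compat => //.
  - have := Rmult_lt_0_compat _ _ (proj1 Ht) (proj1 Htau); nra.
  - lra.
lra.
Qed.

Lemma no_infinite n D f g beta theta delta : @hyps n D f g beta theta -> 0 < delta ->
  forall x0, D x0 -> ~ (exists xs : nat -> vec n, xs O = x0 /\
          forall k, cgmi_step D f g beta theta delta (xs k) (xs (S k))).
Proof.
move=> H Hdel x0 Dx0 [xs [H0 Hst]].
have [c [Hc Hdec]] := step_dec n D f g beta theta delta H Hdel.
have HD : forall k, D (xs k).
  elim=> [|k IH]; [by rewrite H0 | exact: step_D H IH (Hst k)].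
have Hf : forall k, f (xs k) <= f x0 - INR k * c.
  elim=> [|k IH]; first by rewrite H0 /=; lra.
  have := Hdec _ _ (HD k) (Hst k); rewrite S_INR; lra.
have [Hne [_ [_ [Hbd [[Hg _] _]]]]] := H.
have [L HL] := f_lower n D f g Hg Hne Hbd.
have [N HN] := INR_archimed c (f x0 - L) Hc.
have := Hf N; have := HL _ (HD N); lra.
Qed.

Lemma step_exists n D f g beta theta delta : @hyps n D f g beta theta -> 0 < delta ->
  forall x, D x -> delta <= mu D g x -> exists x', cgmi_step D f g beta theta delta x x'.
Proof.
move=> H Hdel x Dx Hmu.
have [Hne [_ [Hcl [Hbd [_ [_ Ht]]]]]] := H.
have [[z [Dz Hz]] _] := mu_spec n D g Hne Hcl Hbd x.
have [tau [Htau Hu]] := armijo_uniform n D f g beta theta H delta Hdel.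
have Hth : Rabs theta < 1 by rewrite Rabs_pos_eq; lra.
have [N HN] := pow_lt_1_zero theta Hth tau (proj1 Htau).
have HaN : armijo f g beta theta x (vsub z x) N.
  rewrite /armijo; apply Hu => //; first by rewrite -Hz.
  have := HN N (le_n N); have := pow_01 theta N Ht => ?; rewrite Rabs_pos_eq; lra.
have [m [Ham Hmin]] := min_nat (armijo f g beta theta x (vsub z x)) (ex_intro _ N HaN).
exists (vadd x (vscale (theta ^ m) (vsub z x))).
split => //; exists z; split => //; split; first by rewrite -Hz.
by exists m.
Qed.

Lemma stage_exists n D f g beta theta delta : @hyps n D f g beta theta -> 0 < delta ->
  forall x0, D x0 -> exists y, cgmi_stage D f g beta theta delta x0 y.
Proof.
move=> H Hdel x0 Dx0.
apply NNPP => Hno.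
pose bad x := D x /\ ~ exists y, cgmi_stage D f g beta theta delta x y.
have Hnext : forall x, bad x -> exists x', bad x' /\ cgmi_step D f g beta theta delta x x'.
  move=> x [Dx Hx].
  have Hmu : delta <= mu D g x.
    apply Rnot_lt_le => Hlt; apply Hx; exists x; exists 0%nat, (fun _ => x).
    split => //; split => //; split => //; move=> k Hk; lia.
  have [x' Hs] := step_exists n D f g beta theta delta H Hdel x Dx Hmu.
  exists x'; split => //; split; first exact: step_D H Dx Hs.
  move=> [y [K [xs [H0 [HK [Hst Hmy]]]]]]; apply Hx; exists y.
  exists K.+1, (fun k => match k with O => x | S k' => xs k' end).
  split => //; split => //; split => //.
  case=> [|k] Hk; first by rewrite H0.
  apply Hst; lia.
pose next x := epsilon (inhabits x) (fun x' => bad x' /\ cgmi_step D f g beta theta delta x x').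
pose xs k := iter k next x0.
have Hxs : forall k, bad (xs k).
  elim=> [|k IH]; first by split.
  have := @epsilon_spec _ (inhabits (xs k)) (fun x' => bad x' /\ cgmi_step D f g beta theta delta (xs k) x') (Hnext _ IH).
  by case.
apply: (no_infinite n D f g beta theta delta H Hdel x0 Dx0).
exists xs; split => // k.
have := @epsilon_spec _ (inhabits (xs k)) (fun x' => bad x' /\ cgmi_step D f g beta theta delta (xs k) x') (Hnext _ (Hxs k)).
by case.
Qed.

Lemma stage_props n D f g beta theta delta x y : @hyps n D f g beta theta -> 0 < delta ->
  D x -> cgmi_stage D f g beta theta delta x y -> D y /\ f y <= f x /\ mu D g y < delta.
Proof.
move=> H Hdel Dx [K [xs [H0 [HK [Hst Hmu]]]]].
have [c [Hc Hdec]] := step_dec n D f g beta theta delta H Hdel.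
have Hk : forall k, (k <= K)%coq_nat -> D (xs k) /\ f (xs k) <= f x.
  elim=> [|k IH] Hk; first by rewrite H0; split => //; lra.
  have [D1 F1] := IH ltac:(lia).
  have Hs := Hst k ltac:(lia).
  split; first exact: step_D H D1 Hs.
  have := Hdec _ _ D1 Hs; lra.
have [D1 F1] := Hk K (le_n K); rewrite HK in D1 F1; tauto.
Qed.

Lemma q_cont n (g : vec n -> vec n) : continuous_map g -> forall x y eps, 0 < eps ->
  exists eta, 0 < eta /\ forall u, vnorm (vsub u x) < eta ->
    Rabs (dot (g u) (vsub u y) - dot (g x) (vsub x y)) < eps.
Proof.
move=> Hgc x y eps Heps.
set A := vnorm (vsub x y). set G := vnorm (g x).
have HA : 0 <= A := vnorm_ge0 _. have HG : 0 <= G := vnorm_ge0 _.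
have He1 : 0 < eps / 2 / (A + 2) by apply Rdiv_lt_0_compat; lra.
have He2 : 0 < eps / 2 / (G + 1) by apply Rdiv_lt_0_compat; lra.
have [eta1 [Heta1 Hc]] := Hgc x _ He1.
exists (Rmin (Rmin eta1 1) (eps / 2 / (G + 1))); split.
  apply Rmin_glb_lt => //; apply Rmin_glb_lt => //; lra.
move=> u Hu.
have Hu1 : vnorm (vsub u x) < eta1.
  have := Rmin_l (Rmin eta1 1) (eps / 2 / (G + 1)); have := Rmin_l eta1 1; lra.
have Hu2 : vnorm (vsub u x) < 1.
  have := Rmin_l (Rmin eta1 1) (eps / 2 / (G + 1)); have := Rmin_r eta1 1; lra.
have Hu3 : vnorm (vsub u x) < eps / 2 / (G + 1).
  have := Rmin_r (Rmin eta1 1) (eps / 2 / (G + 1)); lra.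
have -> : dot (g u) (vsub u y) - dot (g x) (vsub x y) =
   dot (vsub (g u) (g x)) (vsub u y) + dot (g x) (vsub u x) by rewrite !dot_sub_l !dot_sub_r; ring.
have T1 := CS (vsub (g u) (g x)) (vsub u y).
have T2 := CS (g x) (vsub u x).
have Huy : vnorm (vsub u y) <= 1 + A by have := vnorm_tri u x y; rewrite -/A; lra.
have Hgu := Hc u Hu1.
have B1 : vnorm (vsub (g u) (g x)) * vnorm (vsub u y) < eps / 2.
  have E : eps / 2 / (A + 2) * (A + 2) = eps / 2 by field; lra.
  have := vnorm_ge0 (vsub (g u) (g x)); have := vnorm_ge0 (vsub u y); nra.
have B2 : G * vnorm (vsub u x) < eps / 2.
  have E : eps / 2 / (G + 1) * (G + 1) = eps / 2 by field; lra.
  have := vnorm_ge0 (vsub u x); nra.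
rewrite -/G in T2.
have := Rabs_triang (dot (vsub (g u) (g x)) (vsub u y)) (dot (g x) (vsub u x)); lra.
Qed.

Theorem theorem4p1 (n : nat) (D : vec n -> Prop) (f : vec n -> R)
    (g : vec n -> vec n) (beta theta : R) (delta : nat -> R)
    (HDne : exists x, D x) (HDconv : convex_vset D) (HDcl : closed_vset D)
    (HDbd : bounded_vset D) (Hf : C1_with_gradient f g)
    (Hbeta : 0 < beta < 1) (Htheta : 0 < theta < 1)
    (Hdelta_pos : forall p, 0 < delta p) (Hdelta_lim : Un_cv delta 0) :
  (forall p x0, D x0 ->
     ~ (exists xs : nat -> vec n, xs O = x0 /\
          forall k, cgmi_step D f g beta theta (delta p) (xs k) (xs (S k)))) /\
  (forall p x0, D x0 -> exists y, cgmi_stage D f g beta theta (delta p) x0 y) /\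
  (forall w : nat -> vec n,
     D (w O) ->
     (forall p, cgmi_stage D f g beta theta (delta p) (w p) (w (S p))) ->
     ((exists x, limit_point w x) /\
      (forall x, limit_point w x -> D0 D g x)) /\
     (pseudo_convex_on D f g ->
        (forall x, limit_point w x -> Dstar D f x) /\
        (forall fstar, is_inf_on D f fstar -> Un_cv (fun p => f (w p)) fstar))).
Proof.
have H : hyps n D f g beta theta by [].
split; first by move=> p x0 Dx0; apply: no_infinite H (Hdelta_pos p) x0 Dx0.
split; first by move=> p x0 Dx0; apply: stage_exists H (Hdelta_pos p) x0 Dx0.
move=> w Hw0 Hst.
have Hw : forall p, D (w p).
  elim=> [|p IH] //; exact: (stage_props n D f g beta theta (delta p) _ _ H (Hdelta_pos p) IH (Hst p)).1.
have Hmono : forall p, f (w (S p)) <= f (w p) := fun p =>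
  (stage_props n D f g beta theta (delta p) _ _ H (Hdelta_pos p) (Hw p) (Hst p)).2.1.
have Hmu : forall p, mu D g (w (S p)) < delta p := fun p =>
  (stage_props n D f g beta theta (delta p) _ _ H (Hdelta_pos p) (Hw p) (Hst p)).2.2.
have [M [HM0 HM]] := bounded_nonneg n D HDbd HDne.
have [xl Hxl] := bw n w M (fun p => HM _ (Hw p)).
have HD0 : forall x, limit_point w x -> D0 D g x.
  move=> x Hlp; split; first exact: closed_lp n D w x HDcl Hw Hlp.
  move=> y Dy; apply Rnot_lt_le => Hneg.
  set a := dot (g x) (vsub x y).
  have Ha : a = - dot (g x) (vsub y x) by rewrite /a !dot_sub_r; ring.
  have Ha0 : 0 < a by lra.
  have [eta [Heta Hq]] := q_cont n g (proj2 Hf) x y (a / 2) ltac:(lra).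
  have [N1 HN1] := Hdelta_lim (a / 2) ltac:(lra).
  have [p [Hp1 Hp2]] := Hlp eta Heta N1.+1.
  case: p Hp1 Hp2 => [|p'] Hp1 Hp2; first lia.
  have Hd := HN1 p' ltac:(lia). rewrite /R_dist Rminus_0_r in Hd.
  have Hm := Hmu p'.
  have [_ Hmax] := mu_spec n D g HDne HDcl HDbd (w p'.+1).
  have := Hmax y Dy. have := Hq _ Hp2. rewrite -/a.
  move: Hd; split_Rabs; lra.
split; first by split; [exists xl | exact: HD0].
move=> Hpc.
have HDs : forall x, limit_point w x -> Dstar D f x.
  move=> x Hlp; have [Dx Hx] := HD0 x Hlp; split => // y Dy.
  exact: Hpc x y Dx Dy (Hx y Dy).
split => // fstar [Hinf1 Hinf2].
have [Dx Hx] := HDs xl Hxl.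
have Hfs : fstar = f xl by apply Rle_antisym; [exact: Hinf1 | exact: Hinf2].
move=> eps Heps.
have [eta [Heta Hc]] := f_cont n f g (proj1 Hf) xl eps Heps.
have [p0 [_ Hp0]] := Hxl eta Heta 0%nat.
exists p0 => p Hp.
have Hle : f (w p) <= f (w p0).
  elim: Hp => [|q _ IH]; first lra.
  have := Hmono q; lra.
have := Hc _ Hp0. have := Hinf1 _ (Hw p). rewrite /R_dist.
rewrite -Hfs. split_Rabs; lra.
Qed.
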